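(* Let $\{A_1,\dots,A_k\}\subseteq H_n$ and $\{B_1,\dots,B_k\}\subseteq H_m$ be two commuting families, and let $U\in M_n$, $V\in M_m$ be unitary matrices such that $U^*A_iU=\mathrm{diag}(a_{i1},\dots,a_{in})$ and $VB_iV^*=\mathrm{diag}(b_{i1},\dots,b_{im})$ for $i=1,\dots,k$. Let $(a_{ij})\in M_{k,n}$ and $(b_{ij})\in M_{k,m}$ be the real matrices formed from these diagonals. The following are equivalent: (a) there is a completely positive map $\Phi:M_n\to M_m$ with $\Phi(A_i)=B_i$ for $i=1,\dots,k$; (b) there is an $n\times m$ entrywise nonnegative matrix $D=(d_{pq})$ with $(b_{ij})=(a_{ij})D$. If (b) holds and, for $1\le j\le m$, $F_j\in M_{n,m}$ denotes the matrix whose $j$-th column is $(\sqrt{d_{1j}},\dots,\sqrt{d_{nj}})^t$ and whose other entries are zero, then $B_i=\sum_{j=1}^m (UF_jV)^*A_i(UF_jV)$ for $i=1,\dots,k$. Furthermore: (1) a map $\Phi$ as in (a) can be chosen unital if and only if $D$ in (b) can be chosen column stochastic; (2) a map $\Phi$ as in (a) can be chosen trace preserving if and only if $D$ in (b) can be chosen row stochastic; (3) a map $\Phi$ as in (a) can be chosen unital and trace preserving if and only if $D$ in (b) can be chosen doubly stochastic (in which case $m=n$).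
   Context: $H_n$ is the set of $n\times n$ complex Hermitian matrices. A linear map $\Phi:M_n\to M_m$ is completely positive if for every $k\ge1$ the map $(A_{ij})\mapsto(\Phi(A_{ij}))$ on $k\times k$ block matrices with blocks in $M_n$ sends positive semidefinite matrices to positive semidefinite matrices; it is unital if $\Phi(I_n)=I_m$ and trace preserving if $\mathrm{tr}\,\Phi(A)=\mathrm{tr}\,A$ for all $A$. A nonnegative matrix is column (resp. row) stochastic if every column (resp. row) sums to 1, and doubly stochastic if square and both row and column stochastic. *)

(* Defs.v *)
(* Complex numbers are modelled by an arbitrary
   C : numClosedFieldType (e.g. algC). *)
From HB Require Import structures.
From mathcomp Require Import all_boot all_order all_algebra.
Set Implicit Arguments. Unset Strict Implicit. Unset Printing Implicit Defensive.
Import Order.TTheory GRing.Theory Num.Theory.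
Local Open Scope ring_scope.
Local Open Scope sesquilinear_scope.

(* A^* (conjugate transpose) is  A ^t*  (spectral.v);
   Hermitian matrices: A \is hermsymmx  (sesquilinear.v);
   unitary matrices: U \is unitarymx   (spectral.v). *)

Definition psdmx {C : numClosedFieldType} (n : nat) (A : 'M[C]_n) : Prop :=
  A \is hermsymmx /\ forall x : 'cV[C]_n, 0 <= (x ^t* *m A *m x) 0 0.

Definition blockmx {C : numClosedFieldType} (n k : nat)
  (A : 'I_k -> 'I_k -> 'M[C]_n) : 'M[C]_(\sum_(i < k) n) :=
  \mxblock_(i < k, j < k) A i j.

Definition completely_positive {C : numClosedFieldType} (n m : nat)
  (Phi : 'M[C]_n -> 'M[C]_m) : Prop :=
  forall (k : nat) (A : 'I_k -> 'I_k -> 'M[C]_n),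
    psdmx (blockmx A) -> psdmx (blockmx (fun i j => Phi (A i j))).

Definition unital_map {C : numClosedFieldType} (n m : nat)
  (Phi : 'M[C]_n -> 'M[C]_m) : Prop := Phi 1%:M = 1%:M.

Definition trace_preserving {C : numClosedFieldType} (n m : nat)
  (Phi : 'M[C]_n -> 'M[C]_m) : Prop := forall A : 'M[C]_n, \tr (Phi A) = \tr A.

Definition nonneg_mx {C : numClosedFieldType} (p q : nat) (D : 'M[C]_(p, q)) : Prop :=
  forall i j, 0 <= D i j.

Definition col_stochastic {C : numClosedFieldType} (p q : nat) (D : 'M[C]_(p, q)) : Prop :=
  nonneg_mx D /\ forall j, \sum_(i < p) D i j = 1.

Definition row_stochastic {C : numClosedFieldType} (p q : nat) (D : 'M[C]_(p, q)) : Prop :=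
  nonneg_mx D /\ forall i, \sum_(j < q) D i j = 1.

Definition doubly_stochastic {C : numClosedFieldType} (p q : nat) (D : 'M[C]_(p, q)) : Prop :=
  p = q /\ row_stochastic D /\ col_stochastic D.

Definition Fmx {C : numClosedFieldType} (n m : nat) (D : 'M[C]_(n, m)) (j : 'I_m)
  : 'M[C]_(n, m) :=
  \matrix_(p < n, q < m) (if q == j then sqrtC (D p j) else 0).

(* Main.v *)
Require Import Defs.
From HB Require Import structures.
From mathcomp Require Import all_boot all_order all_algebra.
Set Implicit Arguments. Unset Strict Implicit. Unset Printing Implicit Defensive.
Import Order.TTheory GRing.Theory Num.Theory.
Local Open Scope ring_scope.
Local Open Scope sesquilinear_scope.

Lemma adjM (C : numClosedFieldType) p q r (X : 'M[C]_(p,q)) (Y : 'M[C]_(q,r)) :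
  (X *m Y)^t* = Y^t* *m X^t*.
Proof. by rewrite trmx_mul map_mxM. Qed.

Lemma adj_sum (C : numClosedFieldType) p q (I : finType) (F : I -> 'M[C]_(p,q)) :
  (\sum_i F i)^t* = \sum_i (F i)^t*.
Proof. by apply/matrixP => x y; rewrite !mxE !summxE rmorph_sum; apply: eq_bigr => i _; rewrite !mxE. Qed.

Lemma hermE (C : numClosedFieldType) p (M : 'M[C]_p) : (M \is hermsymmx) <-> M = M^t*.
Proof. split; [move/is_hermitianmxP; rewrite expr0 scale1r // | move=> h; apply/is_hermitianmxP; rewrite expr0 scale1r //]. Qed.

Definition kraus (C : numClosedFieldType) n m (I : finType) (K : I -> 'M[C]_(n,m))
  (X : 'M[C]_n) : 'M[C]_m := \sum_r (K r)^t* *m X *m K r.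

Lemma kraus_is_linear (C : numClosedFieldType) n m (I : finType) (K : I -> 'M[C]_(n,m)) :
  linear (kraus K).
Proof.
move=> c X Y; rewrite /kraus scaler_sumr -big_split /=; apply: eq_bigr => r _.
by rewrite mulmxDr mulmxDl -scalemxAr -scalemxAl.
Qed.

HB.instance Definition _ (C : numClosedFieldType) n m (I : finType) (K : I -> 'M[C]_(n,m)) :=
  @GRing.isLinear.Build _ _ _ _ (kraus K) (kraus_is_linear K).


Lemma quad_ge0 (C : numClosedFieldType) p (s : 'M[C]_(p,1)) : 0 <= (s^t* *m s) 0 0.
Proof. rewrite !mxE; apply: sumr_ge0 => i _; rewrite !mxE mulrC; exact: mul_conjC_ge0. Qed.

Lemma psd_congr (C : numClosedFieldType) p q (M : 'M[C]_p) (X : 'M[C]_(p,q)) :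
  psdmx M -> psdmx (X^t* *m M *m X).
Proof.
move=> [/hermE hM pM]; split.
  by apply/hermE; rewrite !adjM trmxCK -hM mulmxA.
move=> x; have := pM (X *m x); rewrite adjM !mulmxA //.
Qed.

Lemma psd_sum (C : numClosedFieldType) p (I : finType) (F : I -> 'M[C]_p) :
  (forall r, psdmx (F r)) -> psdmx (\sum_r F r).
Proof.
move=> H; split.
  apply/hermE; rewrite adj_sum; apply: eq_bigr => r _; apply/hermE; exact: (H r).1.
move=> x; rewrite mulmx_sumr mulmx_suml summxE; apply: sumr_ge0 => r _; exact: (H r).2.
Qed.

Lemma map_mxblock (T1 T2 : Type) (f : T1 -> T2) p q (p_ : 'I_p -> nat) (q_ : 'I_q -> nat)
  (B_ : forall i j, 'M[T1]_(p_ i, q_ j)) :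
  map_mx f (\mxblock_(i, j) B_ i j) = \mxblock_(i, j) map_mx f (B_ i j).
Proof. by apply/matrixP => i j; rewrite !mxE. Qed.

Lemma sum_if_mul (C : numClosedFieldType) k p q r (F : 'I_k -> 'M[C]_(p,q)) (M : 'M[C]_(q,r)) j :
  \sum_l F l *m (if l == j then M else 0) = F j *m M.
Proof.
rewrite (bigD1 j) //= eqxx big1 ?addr0 // => l /negbTE ->; exact: mulmx0.
Qed.

Lemma sum_if_adj (C : numClosedFieldType) k p q r (F : 'I_k -> 'M[C]_(p,r)) (M : 'M[C]_(p,q)) i :
  \sum_l (if l == i then M else 0)^t* *m F l = M^t* *m F i.
Proof.
rewrite (bigD1 i) //= eqxx big1 ?addr0 // => l /negbTE ->.
by rewrite trmx0 map_mx0 mul0mx.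
Qed.

Lemma kraus_cp (C : numClosedFieldType) n m (I : finType) (K : I -> 'M[C]_(n,m)) :
  completely_positive (kraus K).
Proof.
move=> k A HA.
pose BK r : 'M[C]_(\sum_(i < k) n, \sum_(i < k) m) :=
  \mxblock_(i < k, j < k) (if i == j then K r else 0).
suff -> : blockmx (fun i j => kraus K (A i j)) = \sum_r (BK r)^t* *m blockmx A *m BK r.
  by apply: psd_sum => r; apply: psd_congr.
under [RHS]eq_bigr => r _ do rewrite /BK tr_mxblock map_mxblock !mul_mxblock.
rewrite /blockmx mxblock_sum.
apply: eq_bigr => r _; apply: eq_mxblock => i j.
by rewrite sum_if_mul sum_if_adj.
Qed.

Lemma sqrt_conj_mul (C : numClosedFieldType) (d : C) : 0 <= d -> (sqrtC d)^* * sqrtC d = d.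
Proof.
move=> hd; rewrite conj_Creal ?ger0_real ?sqrtC_ge0 //.
by rewrite -expr2 sqrtCK.
Qed.

Lemma unitary_l (C : numClosedFieldType) n (U : 'M[C]_n) : U \is unitarymx -> U^t* *m U = 1%:M.
Proof. by move=> HU; have := trmxC_unitary U; rewrite HU => /unitarymxP; rewrite trmxCK. Qed.

Lemma unitary_r (C : numClosedFieldType) n (U : 'M[C]_n) : U \is unitarymx -> U *m U^t* = 1%:M.
Proof. by move/unitarymxP. Qed.

Lemma adj_diag_entry (C : numClosedFieldType) n m (G : 'M[C]_(n,m)) (d : 'rV[C]_n) y z :
  (G^t* *m diag_mx d *m G) y z = \sum_x (G x y)^* * (d 0 x * G x z).
Proof. by rewrite mul_mx_diag !mxE; apply: eq_bigr => x _; rewrite !mxE mulrA. Qed.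

Lemma kraus_conj (C : numClosedFieldType) n m (I : finType) (G : I -> 'M[C]_(n,m))
  (U : 'M[C]_n) (V : 'M[C]_m) X :
  kraus (fun r => U *m G r *m V) X = V^t* *m (\sum_r (G r)^t* *m (U^t* *m X *m U) *m G r) *m V.
Proof.
rewrite /kraus mulmx_sumr mulmx_suml; apply: eq_bigr => r _.
by rewrite !adjM !mulmxA.
Qed.

Definition Gmx (C : numClosedFieldType) n m (D : 'M[C]_(n,m)) (r : 'I_n * 'I_m) : 'M[C]_(n,m) :=
  \matrix_(x, y) (if (x == r.1) && (y == r.2) then sqrtC (D r.1 r.2) else 0).

Lemma Gmx_diag (C : numClosedFieldType) n m (D : 'M[C]_(n,m)) (d : 'rV[C]_n) :
  nonneg_mx D ->
  \sum_r (Gmx D r)^t* *m diag_mx d *m Gmx D r = diag_mx (d *m D).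
Proof.
move=> HD; apply/matrixP => y z; rewrite summxE.
under eq_bigr => r _ do rewrite adj_diag_entry.
have E : forall r : 'I_n * 'I_m, \sum_x ((Gmx D r) x y)^* * (d 0 x * (Gmx D r) x z)
   = (fun p q => d 0 p * D p q * ((y == q)%:R * (z == q)%:R)) r.1 r.2.
  move=> [p q] /=; rewrite (bigD1 p) //= big1 ?addr0.
    rewrite !mxE /= eqxx /=.
    case: (y == q); case: (z == q);
      rewrite /= ?mulr0n ?mulr1n ?conjC0 ?mulr0 ?mul0r ?mulr1 //. all: try by rewrite mulrCA sqrt_conj_mul. all: try by rewrite mulr0.
  by move=> x /negbTE nx; rewrite !mxE nx /= conjC0 mul0r.
rewrite (eq_bigr _ (fun r _ => E r)) -(pair_bigA _ (fun p q => d 0 p * D p q * ((y == q)%:R * (z == q)%:R))) /=.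
rewrite !mxE; case: (eqVneq y z) => [<-|nyz] /=.
  rewrite mulr1n; apply: eq_bigr => p _; rewrite (bigD1 y) //= big1 ?addr0 ?eqxx ?mulr1 //.
  by move=> q /negbTE; rewrite eq_sym => ->; rewrite mul0r mulr0.
rewrite mulr0n; apply: big1 => p _; apply: big1 => q _.
case: (eqVneq y q) => [yq|nyq]; first by rewrite -yq [z == y]eq_sym (negbTE nyz) !mulr0.
by rewrite mul0r mulr0.
Qed.

Lemma Fmx_diag (C : numClosedFieldType) n m (D : 'M[C]_(n,m)) (d : 'rV[C]_n) :
  nonneg_mx D ->
  \sum_j (Fmx D j)^t* *m diag_mx d *m Fmx D j = diag_mx (d *m D).
Proof.
move=> HD; apply/matrixP => y z; rewrite summxE.
under eq_bigr => j _ do rewrite adj_diag_entry.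
rewrite [RHS]mxE; case: (eqVneq y z) => [<-|nyz].
  rewrite mulr1n (bigD1 y) //= [X in _ + X]big1 ?addr0.
    rewrite mxE; apply: eq_bigr => x _; rewrite !mxE eqxx.
    by rewrite mulrCA sqrt_conj_mul.
  move=> j nj; apply: big1 => x _; rewrite !mxE.
  by rewrite eq_sym (negbTE nj) conjC0 mul0r.
rewrite mulr0n; apply: big1 => j _; apply: big1 => x _; rewrite !mxE.
case: (eqVneq y j) => [yj|nyj]; last by rewrite conjC0 mul0r.
by rewrite -yj [z == y]eq_sym (negbTE nyz) !mulr0.
Qed.

Lemma Gmx_tp (C : numClosedFieldType) n m (D : 'M[C]_(n,m)) :
  row_stochastic D -> \sum_r Gmx D r *m (Gmx D r)^t* = 1%:M.
Proof.
move=> [HD Hr]; apply/matrixP => x x'; rewrite summxE.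
have E : forall r : 'I_n * 'I_m, (Gmx D r *m (Gmx D r)^t*) x x'
   = (fun p q => (x == p)%:R * (x' == p)%:R * D p q) r.1 r.2.
  move=> [p q] /=; rewrite mxE (bigD1 q) //= [X in _ + X]big1 ?addr0.
    rewrite !mxE /= eqxx !andbT.
    case: (x == p); case: (x' == p);
      rewrite /= ?mulr0n ?mulr1n ?conjC0 ?mulr0 ?mul0r ?mulr1 ?mul1r //.
    all: try by rewrite mulrC sqrt_conj_mul.
    all: try by rewrite mul0r.
  by move=> y ny; rewrite !mxE (negbTE ny) !andbF mul0r.
rewrite (eq_bigr _ (fun r _ => E r)) -(pair_bigA _ (fun p q => (x == p)%:R * (x' == p)%:R * D p q)) /=.
rewrite (bigD1 x) //= [X in _ + X]big1 ?addr0.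
  rewrite eqxx mul1r -mulr_sumr Hr mulr1 !mxE eq_sym.
  by case: (x == x').
move=> p np; apply: big1 => q _; by rewrite eq_sym (negbTE np) !mul0r.
Qed.

Lemma map_mxrow (T1 T2 : Type) (f : T1 -> T2) p m (p_ : 'I_p -> nat)
  (B_ : forall j, 'M[T1]_(m, p_ j)) :
  map_mx f (\mxrow_j B_ j) = \mxrow_j map_mx f (B_ j).
Proof. by apply/matrixP => i j; rewrite !mxE. Qed.

Lemma quad_block1 (C : numClosedFieldType) n (B : 'M[C]_n) (y : 'I_1 -> 'cV[C]_n) :
  (@mxcol C 1 (fun _ => n) 1 y)^t* *m @mxblock C 1 1 (fun _ => n) (fun _ => n) (fun _ _ => B)
    *m @mxcol C 1 (fun _ => n) 1 y = (y ord0)^t* *m B *m y ord0.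
Proof.
rewrite tr_mxcol map_mxrow mul_mxrow_mxblock mul_mxrow_mxcol big_ord1.
by rewrite big_ord1.
Qed.

Lemma psd_block1 (C : numClosedFieldType) n (P : 'M[C]_n) :
  psdmx P -> psdmx (blockmx (fun (_ _ : 'I_1) => P)).
Proof.
move=> [/hermE hP pP]; split.
  apply/hermE; rewrite /blockmx tr_mxblock map_mxblock; apply: eq_mxblock => i j.
  exact: hP.
move=> x; rewrite -[x](@submxcolK _ 1 (fun _ => n)) /blockmx quad_block1; exact: pP.
Qed.

Lemma cp_pos (C : numClosedFieldType) n m (Phi : 'M[C]_n -> 'M[C]_m) (P : 'M[C]_n) :
  completely_positive Phi -> psdmx P -> forall y : 'cV[C]_m, 0 <= (y^t* *m Phi P *m y) 0 0.
Proof.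
move=> HPhi hP y; have [_ H] := HPhi 1 (fun _ _ => P) (psd_block1 hP).
have := H (@mxcol C 1 (fun _ => m) 1 (fun _ => y)).
by rewrite /blockmx quad_block1.
Qed.

Lemma entry_conj (C : numClosedFieldType) m (V M : 'M[C]_m) q :
  (V *m M *m V^t*) q q = (((row q V)^t*)^t* *m M *m (row q V)^t*) 0 0.
Proof.
rewrite trmxCK !mxE; apply: eq_bigr => l _; rewrite !mxE; congr (_ * _).
by apply: eq_bigr => t _; rewrite !mxE.
Qed.

Lemma entry_sum (C : numClosedFieldType) m (I : finType) (V : 'M[C]_m) (c : I -> C) (M : I -> 'M[C]_m) q :
  (V *m (\sum_j c j *: M j) *m V^t*) q q = \sum_j c j * (V *m M j *m V^t*) q q.
Proof.
rewrite mulmx_sumr mulmx_suml summxE; apply: eq_bigr => j _.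
by rewrite -scalemxAr -scalemxAl mxE.
Qed.

Lemma tr_delta (C : numClosedFieldType) n (j : 'I_n) : \tr (delta_mx j j : 'M[C]_n) = 1.
Proof.
rewrite /mxtrace (bigD1 j) //= mxE !eqxx big1 ?addr0 // => i ni.
by rewrite mxE (negbTE ni).
Qed.

Lemma a_to_b (C : numClosedFieldType) (n m k : nat)
  (A : 'I_k -> 'M[C]_n) (B : 'I_k -> 'M[C]_m)
  (U : 'M[C]_n) (V : 'M[C]_m) (HU : U \is unitarymx) (HV : V \is unitarymx)
  (a : 'M[C]_(k, n)) (b : 'M[C]_(k, m))
  (HUa : forall i, U ^t* *m A i *m U = diag_mx (row i a))
  (HVb : forall i, V *m B i *m V ^t* = diag_mx (row i b))
  (Phi : {linear 'M[C]_n -> 'M[C]_m}) (HPhi : completely_positive Phi)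
  (HPA : forall i, Phi (A i) = B i) :
  let D := \matrix_(j < n, q < m) (V *m Phi (U *m delta_mx j j *m U^t*) *m V^t*) q q in
  [/\ nonneg_mx D, b = a *m D, (unital_map Phi -> col_stochastic D)
    & (trace_preserving Phi -> row_stochastic D)].
Proof.
move=> D.
pose P j := U *m delta_mx j j *m U^t*.
have psdP j : psdmx (P j).
  have -> : P j = ((U *m (delta_mx j (0 : 'I_1) : 'M[C]_(n,1)))^t*)^t* *m 1%:M *m (U *m (delta_mx j (0 : 'I_1) : 'M[C]_(n,1)))^t*.
    rewrite trmxCK mulmx1 adjM trmx_delta map_delta_mx !mulmxA -(mulmxA U) mul_delta_mx.
    by [].
  apply: psd_congr; split; first exact: hermitian1mx_subproof.
  by move=> x; rewrite mulmx1 quad_ge0.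
have nnD : nonneg_mx D.
  by move=> j q; rewrite mxE entry_conj; apply: cp_pos => //; apply: psdP.
have EA i : A i = \sum_j a i j *: P j.
  transitivity (U *m (U^t* *m A i *m U) *m U^t*).
    by rewrite !mulmxA unitary_r // mul1mx -mulmxA unitary_r // mulmx1.
  rewrite HUa diag_mx_sum_delta mulmx_sumr mulmx_suml; apply: eq_bigr => j _.
  by rewrite mxE -scalemxAr -scalemxAl.
have PhiA i : Phi (A i) = \sum_j a i j *: Phi (P j).
  by rewrite EA linear_sum; apply: eq_bigr => j _; rewrite linearZ.
have sumP : \sum_j P j = 1%:M.
  by rewrite /P -mulmx_suml -mulmx_sumr -mx1_sum_delta mulmx1 unitary_r.
split => //.
- apply/matrixP => i q.
  have -> : b i q = (V *m B i *m V^t*) q q by rewrite HVb !mxE eqxx mulr1n.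
  rewrite -HPA PhiA entry_sum !mxE; apply: eq_bigr => j _; by rewrite /D mxE.
- move=> Hu; split => // q.
  transitivity ((V *m Phi (\sum_j P j) *m V^t*) q q).
    rewrite linear_sum mulmx_sumr mulmx_suml summxE; apply: eq_bigr => j _.
    by rewrite /D mxE.
  by rewrite sumP Hu mulmx1 unitary_r // mxE eqxx.
- move=> Ht; split => // j.
  transitivity (\tr (V *m Phi (P j) *m V^t*)).
    by rewrite /mxtrace; apply: eq_bigr => q _; rewrite /D mxE.
  rewrite mxtrace_mulC mulmxA unitary_l // mul1mx Ht /P mxtrace_mulC mulmxA unitary_l //.
  by rewrite mul1mx tr_delta.
Qed.

Lemma kraus_tr (C : numClosedFieldType) n m (I : finType) (K : I -> 'M[C]_(n,m)) X :
  \tr (kraus K X) = \tr (X *m \sum_r K r *m (K r)^t*).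
Proof.
rewrite /kraus mulmx_sumr !raddf_sum /=; apply: eq_bigr => r _.
by rewrite [LHS]mxtrace_mulC [RHS]mxtrace_mulC mulmxA.
Qed.

Lemma b_to_a (C : numClosedFieldType) (n m k : nat)
  (A : 'I_k -> 'M[C]_n) (B : 'I_k -> 'M[C]_m)
  (U : 'M[C]_n) (V : 'M[C]_m) (HU : U \is unitarymx) (HV : V \is unitarymx)
  (a : 'M[C]_(k, n)) (b : 'M[C]_(k, m))
  (HUa : forall i, U ^t* *m A i *m U = diag_mx (row i a))
  (HVb : forall i, V *m B i *m V ^t* = diag_mx (row i b))
  (D : 'M[C]_(n, m)) (HD : nonneg_mx D) (Hb : b = a *m D) :
  let Phi := kraus (fun r => U *m Gmx D r *m V) in
  [/\ completely_positive Phi, forall i, Phi (A i) = B i,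
      (col_stochastic D -> unital_map Phi)
    & (row_stochastic D -> trace_preserving Phi)].
Proof.
move=> Phi; split.
- exact: kraus_cp.
- move=> i; rewrite /Phi kraus_conj HUa Gmx_diag // -row_mul -Hb -HVb.
  by rewrite !mulmxA unitary_l // mul1mx -mulmxA unitary_l // mulmx1.
- move=> [_ Hc]; rewrite /unital_map /Phi kraus_conj mulmx1 unitary_l //.
  have -> : (1%:M : 'M[C]_n) = diag_mx (const_mx 1) by rewrite diag_const_mx.
  rewrite Gmx_diag //.
  have -> : (const_mx 1 : 'rV[C]_n) *m D = const_mx 1.
    apply/matrixP => x y; rewrite !mxE -[RHS](Hc y); apply: eq_bigr => i _.
    by rewrite ?mxE mul1r.
  by rewrite diag_const_mx mulmx1 unitary_l.
- move=> Hr X; rewrite /Phi kraus_tr.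
  have -> : \sum_r (U *m Gmx D r *m V) *m (U *m Gmx D r *m V)^t* = U *m (\sum_r Gmx D r *m (Gmx D r)^t*) *m U^t*.
    rewrite mulmx_sumr mulmx_suml; apply: eq_bigr => r _.
    rewrite !adjM !mulmxA -(mulmxA (U *m Gmx D r) V) unitary_r // mulmx1.
    by [].
  by rewrite Gmx_tp // mulmx1 unitary_r // mulmx1.
Qed.

Lemma item2 (C : numClosedFieldType) (n m k : nat)
  (A : 'I_k -> 'M[C]_n) (B : 'I_k -> 'M[C]_m)
  (U : 'M[C]_n) (V : 'M[C]_m) (HU : U \is unitarymx) (HV : V \is unitarymx)
  (a : 'M[C]_(k, n)) (b : 'M[C]_(k, m))
  (HUa : forall i, U ^t* *m A i *m U = diag_mx (row i a))
  (HVb : forall i, V *m B i *m V ^t* = diag_mx (row i b))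
  (D : 'M[C]_(n, m)) (HD : nonneg_mx D) (Hb : b = a *m D) :
  forall i, B i = \sum_(j < m) (U *m Fmx D j *m V) ^t* *m A i *m (U *m Fmx D j *m V).
Proof.
move=> i; have := kraus_conj (Fmx D) U V (A i); rewrite /kraus => ->.
rewrite HUa Fmx_diag // -row_mul -Hb -HVb.
by rewrite !mulmxA unitary_l // mul1mx -mulmxA unitary_l // mulmx1.
Qed.

Theorem theorem2p1 (C : numClosedFieldType) (n m k : nat)
  (Hn : (0 < n)%N) (Hm : (0 < m)%N)
  (A : 'I_k -> 'M[C]_n) (B : 'I_k -> 'M[C]_m)
  (HA : forall i, A i \is hermsymmx) (HB : forall i, B i \is hermsymmx)
  (HAc : forall i j, A i *m A j = A j *m A i)
  (HBc : forall i j, B i *m B j = B j *m B i)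
  (U : 'M[C]_n) (V : 'M[C]_m) (HU : U \is unitarymx) (HV : V \is unitarymx)
  (a : 'M[C]_(k, n)) (b : 'M[C]_(k, m))
  (HUa : forall i, U ^t* *m A i *m U = diag_mx (row i a))
  (HVb : forall i, V *m B i *m V ^t* = diag_mx (row i b)) :
  [/\ (exists Phi : {linear 'M[C]_n -> 'M[C]_m},
          completely_positive Phi /\ forall i, Phi (A i) = B i)
      <-> (exists D : 'M[C]_(n, m), nonneg_mx D /\ b = a *m D),
      (forall D : 'M[C]_(n, m), nonneg_mx D -> b = a *m D ->
         forall i, B i = \sum_(j < m)
           (U *m Fmx D j *m V) ^t* *m A i *m (U *m Fmx D j *m V)),
      (exists Phi : {linear 'M[C]_n -> 'M[C]_m},
          [/\ completely_positive Phi, unital_map Phi & forall i, Phi (A i) = B i])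
      <-> (exists D : 'M[C]_(n, m), col_stochastic D /\ b = a *m D),
      (exists Phi : {linear 'M[C]_n -> 'M[C]_m},
          [/\ completely_positive Phi, trace_preserving Phi & forall i, Phi (A i) = B i])
      <-> (exists D : 'M[C]_(n, m), row_stochastic D /\ b = a *m D)
    & (exists Phi : {linear 'M[C]_n -> 'M[C]_m},
          [/\ completely_positive Phi, unital_map Phi, trace_preserving Phi
            & forall i, Phi (A i) = B i])
      <-> (exists D : 'M[C]_(n, m), doubly_stochastic D /\ b = a *m D)].
Proof.
split.
- split.
    move=> [Phi [cp hA]]; have [nn hb _ _] := a_to_b HU HV HUa HVb cp hA.
    by eexists; split; [exact: nn | exact: hb].
  move=> [D [nn hb]]; have [cp hA _ _] := b_to_a HU HV HUa HVb nn hb.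
  by exists (kraus (fun r => U *m Gmx D r *m V)).
- by move=> D nn hb; apply: item2.
- split.
    move=> [Phi [cp un hA]]; have [nn hb hu _] := a_to_b HU HV HUa HVb cp hA.
    by eexists; split; [exact: (hu un) | exact: hb].
  move=> [D [[nn hc] hb]]; have [cp hA hu _] := b_to_a HU HV HUa HVb nn hb.
  by exists (kraus (fun r => U *m Gmx D r *m V)); split => //; apply: hu.
- split.
    move=> [Phi [cp tp hA]]; have [nn hb _ ht] := a_to_b HU HV HUa HVb cp hA.
    by eexists; split; [exact: (ht tp) | exact: hb].
  move=> [D [[nn hr] hb]]; have [cp hA _ ht] := b_to_a HU HV HUa HVb nn hb.
  by exists (kraus (fun r => U *m Gmx D r *m V)); split => //; apply: ht.
- split.
    move=> [Phi [cp un tp hA]]; have [nn hb hu ht] := a_to_b HU HV HUa HVb cp hA.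
    have nm : n = m.
      have := tp 1%:M; rewrite un !mxtrace1 => /eqP; rewrite eqr_nat => /eqP.
      by move=> ->.
    by eexists; split; [split; [exact: nm | split; [exact: (ht tp) | exact: (hu un)]] | exact: hb].
  move=> [D [[nm [hr hc]] hb]]; have [cp hA hu ht] := b_to_a HU HV HUa HVb hr.1 hb.
  by exists (kraus (fun r => U *m Gmx D r *m V)); split => //; [apply: hu | apply: ht].
Qed.
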